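(* Let $r=\langle L\leftarrow K\rightarrow R,\ c\rangle$ be a conditional rule schema, let $G$ be a host graph in $\mathcal{G}(\mathcal{L})$, and let $g\colon L\to G$ be a premorphism. Then there exists at most one assignment $\alpha$ such that $g$ is a graph morphism $L^{g,\alpha}\to G$, i.e. such that $g$ preserves sources and targets and $l_G(g_V(v))=l_L(v)^{g,\alpha}$ for every node $v$ of $L$ and $m_G(g_E(e))=m_L(e)^{g,\alpha}$ for every edge $e$ of $L$.
   Context: Graphs. A graph over a label set $\mathcal{C}$ is $G=(V_G,E_G,s_G,t_G,l_G,m_G)$ with finite node set $V_G$ and edge set $E_G$, source and target maps $s_G,t_G\colon E_G\to V_G$, a partial node labelling $l_G\colon V_G\to\mathcal{C}$ and a total edge labelling $m_G\colon E_G\to\mathcal{C}$. $\mathcal{G}(\mathcal{C})$ denotes totally labelled graphs. A graph morphism $g\colon G\to H$ is a pair of maps $g_V\colon V_G\to V_H$, $g_E\colon E_G\to E_H$ preserving sources, targets, edge labels, and the labels of all labelled nodes. Host labels. Let $\mathrm{Char}$ be a fixed set of characters, $\mathbb{B}=\{\mathrm{true},\mathrm{false}\}$, and $\mathcal{L}=(\mathbb{Z}\cup\mathrm{Char}^* )^*\times\mathbb{B}$: a label is a finite sequence of integers and character strings (the empty sequence is allowed and differs from the empty string) paired with a boolean mark. Host graphs are graphs in $\mathcal{G}(\mathcal{L})$. Syntactic labels. Given a finite set Node of node identifiers and pairwise disjoint finite sets IVariable, SVariable, AVariable, LVariable of variables of types int, string, atom, list, expressions are generated by: Integer ::= Digit{Digit}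 | IVariable | $-$Integer | Integer ArithOp Integer | indeg(Node) | outdeg(Node); ArithOp ::= + | $-$ | $*$ | /; String ::= ''{Char}'' | SVariable | String . String (string concatenation); Atom ::= Integer | String | AVariable; List ::= empty | Atom | LVariable | List : List (list concatenation); Label ::= List Mark; Mark ::= true | false. An expression $e\in$ List is simple if (1) it contains no arithmetic operators, (2) it contains at most one occurrence of a list variable, and (3) each occurrence of a string expression in $e$ contains at most one occurrence of a string variable. Conditions: Condition ::= Type(List) | List (= | !=) List | Integer RelOp Integer | edge(Node, Node [, List]) | not Condition | Condition (and | or) Condition, with Type ::= int | string | atom and RelOp ::= > | >= | < | <=. Conditional rule schema. A rule schema $\langle L\leftarrow K\rightarrow R\rangle$ consists of inclusions $K\to L$, $K\to R$ where $L,R$ are totally labelled graphs over Label and $K$ consists of unlabelled nodes only; all list expressions in $L$ are simple and every variable occurring in $R$ occurs in $L$. A conditional rule schema $\langle L\leftarrow K\rightarrow R, c\rangle$ adds a condition $c$ all of whose variables occur in $L$. The variable sets above are those occurring in the rule schema; Node is the set of node identifiers of $L$ (equal to that of $R$). Premorphism: for $L$ labelled over Label and $G\in\mathcal{G}(\mathcal{L})$, a pair of maps $g_V\colon V_L\to V_G$, $g_E\colon E_L\to E_G$ preserving sources and targets (labels ignored). Assignment: $\alpha=(\alpha_I,\alpha_S,\alpha_A,\alpha_L)$ with $\alpha_I\colon\mathrm{IVariable}\to\mathbb{Z}$, $\alpha_S\colon\mathrm{SVariable}\to\mathrm{Char}^*$, $\alpha_A\colon\mathrm{AVariable}\to\mathbb{Z}\cup\mathrm{Char}^*$,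 $\alpha_L\colon\mathrm{LVariable}\to(\mathbb{Z}\cup\mathrm{Char}^* )^*$. Sequences of length one are identified with their single element. Evaluation $e^{g,\alpha}\in(\mathbb{Z}\cup\mathrm{Char}^* )^*$: empty $\mapsto$ empty sequence; a digit string or quoted character string $\mapsto$ the integer or string it denotes; a variable $x\mapsto\alpha(x)$; $-e_1\mapsto -e_1^{g,\alpha}$; $e_1\oplus e_2\mapsto e_1^{g,\alpha}\oplus_{\mathbb{Z}}e_2^{g,\alpha}$; indeg$(n)$/outdeg$(n)\mapsto$ the indegree/outdegree of $g_V(n)$ in $G$; $e_1.e_2$ and $e_1{:}e_2\mapsto$ concatenation of the values. For a label $l=e\,m$, $l^{g,\alpha}=(e^{g,\alpha},\mathrm{true})$ if $m=$true and $(e^{g,\alpha},\mathrm{false})$ otherwise. $L^{g,\alpha}$ is obtained from $L$ by replacing each label $l$ by $l^{g,\alpha}$. *)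

(* Defs.v *)
From HB Require Import structures.
From mathcomp Require Import all_boot all_algebra.
From Stdlib Require Lists.List.
Set Implicit Arguments. Unset Printing Implicit Defensive.
Import GRing.Theory Num.Theory.

Record graph (C : Type) := Graph {
  gV : finType; gE : finType;
  gsrc : gE -> gV; gtgt : gE -> gV;
  glab : gV -> option C;
  gelab : gE -> C
}.

Definition totally_labelled (C : Type) (G : graph C) : Prop :=
  forall v, glab G v <> None.

Definition indeg (C : Type) (G : graph C) (v : gV G) : nat :=
  #|[pred e : gE G | gtgt G e == v]|.
Definition outdeg (C : Type) (G : graph C) (v : gV G) : nat :=
  #|[pred e : gE G | gsrc G e == v]|.

(* Host labels: L = (Z u Char^* )^* x B *)
Inductive hatom (Ch : Type) := HInt of int | HStr of seq Ch.
Definition hlabel (Ch : Type) := (seq (hatom Ch) * bool)%type.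

Inductive arith_op := OAdd | OSub | OMul | ODiv.
Inductive atype := TInt | TString | TAtom.
Inductive relop := RGt | RGe | RLt | RLe.

Section Syntax.
Variables (Ch Node IV SV AV LV : Type).

Inductive iexpr :=
  | INum of nat
  | IVar of IV
  | INeg of iexpr
  | IOp of arith_op & iexpr & iexpr
  | IIndeg of Node
  | IOutdeg of Node.

Inductive sexpr :=
  | SLit of seq Ch
  | SVar of SV
  | SCat of sexpr & sexpr.

Inductive aexpr :=
  | AInt of iexpr
  | AStr of sexpr
  | AVar of AV.

Inductive lexpr :=
  | LEmpty
  | LAtom of aexpr
  | LVar of LV
  | LCat of lexpr & lexpr.

Definition label := (lexpr * bool)%type.

Inductive cond :=
  | CType of atype & lexpr
  | CEq of lexpr & lexpr
  | CNeq of lexpr & lexpr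
  | CRel of relop & iexpr & iexpr
  | CEdge of Node & Node & option lexpr
  | CNot of cond
  | CAnd of cond & cond
  | COr of cond & cond.

(* Variables of all four types (the four sets are disjoint by construction) *)
Inductive var := VI of IV | VS of SV | VA of AV | VL of LV.

Fixpoint ivars (e : iexpr) : seq var :=
  match e with
  | INum _ => [::] | IVar x => [:: VI x] | INeg e => ivars e
  | IOp _ a b => ivars a ++ ivars b | IIndeg _ => [::] | IOutdeg _ => [::]
  end.
Fixpoint svars (e : sexpr) : seq var :=
  match e with
  | SLit _ => [::] | SVar x => [:: VS x] | SCat a b => svars a ++ svars b
  end.
Definition avars (e : aexpr) : seq var :=
  match e with AInt i => ivars i | AStr s => svars s | AVar x => [:: VA x] end.
Fixpoint lvars (e : lexpr) : seq var :=
  match e with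
  | LEmpty => [::] | LAtom a => avars a | LVar x => [:: VL x]
  | LCat a b => lvars a ++ lvars b
  end.
Fixpoint cvars (c : cond) : seq var :=
  match c with
  | CType _ l => lvars l
  | CEq a b | CNeq a b => lvars a ++ lvars b
  | CRel _ a b => ivars a ++ ivars b
  | CEdge _ _ None => [::]
  | CEdge _ _ (Some l) => lvars l
  | CNot c => cvars c
  | CAnd a b | COr a b => cvars a ++ cvars b
  end.

Fixpoint no_arith (e : iexpr) : bool :=
  match e with IOp _ _ _ => false | INeg e => no_arith e | _ => true end.
Fixpoint count_svar (s : sexpr) : nat :=
  match s with SLit _ => 0 | SVar _ => 1 | SCat a b => count_svar a + count_svar b end.
Fixpoint count_lvar (e : lexpr) : nat :=
  match e with
  | LVar _ => 1 | LCat a b => count_lvar a + count_lvar b | _ => 0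
  end.
Definition aexpr_simple (a : aexpr) : bool :=
  match a with
  | AInt i => no_arith i
  | AStr s => count_svar s <= 1
  | AVar _ => true
  end.
Fixpoint atoms_simple (e : lexpr) : bool :=
  match e with
  | LAtom a => aexpr_simple a
  | LCat a b => atoms_simple a && atoms_simple b
  | _ => true
  end.
Definition simple (e : lexpr) : bool := atoms_simple e && (count_lvar e <= 1).

End Syntax.

Record assignment (Ch IV SV AV LV : Type) := Assignment {
  asgI : IV -> int;
  asgS : SV -> seq Ch;
  asgA : AV -> hatom Ch;
  asgL : LV -> seq (hatom Ch)
}.

Section Eval.
Variables (Ch Node IV SV AV LV : Type).
Variables (G : graph (hlabel Ch)) (gv : Node -> gV G)
          (alpha : assignment Ch IV SV AV LV).

Definition eval_op (o : arith_op) (a b : int) : int :=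
  match o with
  | OAdd => (a + b)%R | OSub => (a - b)%R | OMul => (a * b)%R | ODiv => (a %/ b)%Z
  end.

Fixpoint ieval (e : iexpr Node IV) : int :=
  match e with
  | INum n => n%:Z
  | IVar x => asgI alpha x
  | INeg e => (- ieval e)%R
  | IOp o a b => eval_op o (ieval a) (ieval b)
  | IIndeg n => (indeg G (gv n))%:Z
  | IOutdeg n => (outdeg G (gv n))%:Z
  end.
Fixpoint seval (e : sexpr Ch SV) : seq Ch :=
  match e with
  | SLit s => s | SVar x => asgS alpha x | SCat a b => seval a ++ seval b
  end.
Definition aeval (e : aexpr Ch Node IV SV AV) : hatom Ch :=
  match e with
  | AInt i => HInt Ch (ieval i) | AStr s => HStr (seval s) | AVar x => asgA alpha x
  end.
Fixpoint leval (e : lexpr Ch Node IV SV AV LV) : seq (hatom Ch) :=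
  match e with
  | LEmpty => [::]
  | LAtom a => [:: aeval a]     (* length-one sequences = their element *)
  | LVar x => asgL alpha x
  | LCat a b => leval a ++ leval b
  end.
Definition label_eval (l : label Ch Node IV SV AV LV) : hlabel Ch := (leval l.1, l.2).
End Eval.

(* Node identifiers = nodes of L.  K: unlabelled nodes only, no edges, *)
(* included into L and R by injective node maps.                       *)
Record rule_schema (Ch IV SV AV LV : Type) := RuleSchema {
  rLV : finType; rLE : finType;
  rLsrc : rLE -> rLV; rLtgt : rLE -> rLV;
  rLlab : rLV -> label Ch rLV IV SV AV LV;
  rLelab : rLE -> label Ch rLV IV SV AV LV;
  rRV : finType; rRE : finType;
  rRsrc : rRE -> rRV; rRtgt : rRE -> rRV;
  rRlab : rRV -> label Ch rLV IV SV AV LV;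
  rRelab : rRE -> label Ch rLV IV SV AV LV;
  rKV : finType;
  rKL : rKV -> rLV;
  rKR : rKV -> rRV;
  rcond : cond Ch rLV IV SV AV LV
}.

Section Schema.
Variables (Ch IV SV AV LV : Type) (r : rule_schema Ch IV SV AV LV).

Definition occurs_L (x : var IV SV AV LV) : Prop :=
  (exists v, List.In x (lvars (rLlab r v).1)) \/
  (exists e, List.In x (lvars (rLelab r e).1)).
Definition occurs_R (x : var IV SV AV LV) : Prop :=
  (exists v, List.In x (lvars (rRlab r v).1)) \/
  (exists e, List.In x (lvars (rRelab r e).1)).
Definition occurs_c (x : var IV SV AV LV) : Prop := List.In x (cvars (rcond r)).

Definition wf_rule_schema : Prop :=
  [/\ injective (rKL r), injective (rKR r),
      (forall v, simple (rLlab r v).1) /\ (forall e, simple (rLelab r e).1),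
      (forall x, occurs_R x -> occurs_L x) /\ (forall x, occurs_c x -> occurs_L x)
    &
      (forall x, occurs_L x \/ occurs_R x \/ occurs_c x)].

Definition premorphism (G : graph (hlabel Ch)) (gv : rLV r -> gV G) (ge : rLE r -> gE G) : Prop :=
  (forall e, gsrc G (ge e) = gv (rLsrc r e)) /\
  (forall e, gtgt G (ge e) = gv (rLtgt r e)).

Definition morphism_under (G : graph (hlabel Ch)) (gv : rLV r -> gV G) (ge : rLE r -> gE G)
    (alpha : assignment Ch IV SV AV LV) : Prop :=
  [/\ premorphism G gv ge,
      forall v, glab G (gv v) = Some (label_eval G gv alpha (rLlab r v))
    & forall e, gelab G (ge e) = label_eval G gv alpha (rLelab r e)].
End Schema.

(* Main.v *)
Require Import Defs.
From mathcomp Require Import all_boot all_algebra.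
From Stdlib Require List.
From Stdlib Require Import FunctionalExtensionality.

Lemma cat_split (T : Type) (s1 s2 s3 s4 : seq T) :
  size s1 = size s2 -> s1 ++ s3 = s2 ++ s4 -> s1 = s2 /\ s3 = s4.
Proof.
elim: s1 s2 => [|x s1 IH] [|y s2] //= Hs H.
case: H => -> H'; case: (IH s2) => //; [by case: Hs | by move=> -> ->].
Qed.

Lemma cat_split_r (T : Type) (s1 s2 s3 s4 : seq T) :
  size s3 = size s4 -> s1 ++ s3 = s2 ++ s4 -> s1 = s2 /\ s3 = s4.
Proof.
move=> Hs H; have Hz := congr1 size H; apply: (@cat_split _ s1 s2 s3 s4 _ H).
by move: Hz; rewrite !size_cat Hs => /eqP; rewrite eqn_add2r => /eqP.
Qed.

Section Uniq.
Variables (Ch Node IV SV AV LV : Type) (G : graph (hlabel Ch)) (gv : Node -> gV G)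
  (a b : assignment Ch IV SV AV LV).

Definition agree (x : var IV SV AV LV) : Prop :=
  match x with
  | VI i => asgI a i = asgI b i
  | VS s => asgS a s = asgS b s
  | VA t => asgA a t = asgA b t
  | VL l => asgL a l = asgL b l
  end.

Lemma ieval_uniq (e : iexpr Node IV) : no_arith e ->
  ieval G gv a e = ieval G gv b e -> forall x, List.In x (ivars SV AV LV e) -> agree x.
Proof.
elim: e => [n|i|e IH|o e1 _ e2 _|n|n] //= Hn H x.
- by case=> [<-|[]].
- apply: IH => //; exact: GRing.oppr_inj H.
Qed.

Lemma svars0 (e : sexpr Ch SV) : count_svar e = 0 -> svars IV AV LV e = [::] /\ seval a e = seval b e.
Proof.
elim: e => //= e1 IH1 e2 IH2 /eqP; rewrite addn_eq0 => /andP [/eqP /IH1 [-> ->] /eqP /IH2 [-> ->]].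
by [].
Qed.

Lemma seval_uniq (e : sexpr Ch SV) : count_svar e <= 1 ->
  seval a e = seval b e -> forall x, List.In x (svars IV AV LV e) -> agree x.
Proof.
elim: e => [s|s|e1 IH1 e2 IH2] //= Hc H x; first by case=> [<-|[]].
case E1: (count_svar e1) Hc => [|c1] Hc.
  have [S1 V1] := svars0 _ E1; rewrite S1 /= => Hx.
  rewrite V1 in H; have [_ H2] := @cat_split _ _ _ _ _ (erefl _) H.
  by apply: IH2.
have E2 : count_svar e2 = 0 by move: Hc; rewrite addSn ltnS leqn0 => /eqP; case: c1 {E1}.
have [S2 V2] := svars0 _ E2; rewrite S2 cats0 => Hx.
rewrite V2 in H; have [H1 _] := @cat_split_r _ _ _ _ _ (erefl _) H.
apply: IH1 => //; rewrite E1; move: Hc; rewrite E2 addn0 //.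
Qed.

Lemma aeval_uniq (e : aexpr Ch Node IV SV AV) : aexpr_simple e ->
  aeval G gv a e = aeval G gv b e -> forall x, List.In x (avars LV e) -> agree x.
Proof.
case: e => [i|s|t] /= Hs H x.
- by case: H => H; apply: (ieval_uniq _ Hs H).
- by case: H => H; apply: (seval_uniq _ Hs H).
- by case=> [<-|[]].
Qed.

Lemma lvars0 (e : lexpr Ch Node IV SV AV LV) : count_lvar e = 0 ->
  size (leval G gv a e) = size (leval G gv b e).
Proof.
elim: e => //= e1 IH1 e2 IH2 /eqP; rewrite addn_eq0 => /andP [/eqP /IH1 H1 /eqP /IH2 H2].
by rewrite !size_cat H1 H2.
Qed.

Lemma leval_uniq (e : lexpr Ch Node IV SV AV LV) : atoms_simple e -> count_lvar e <= 1 ->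
  leval G gv a e = leval G gv b e -> forall x, List.In x (lvars e) -> agree x.
Proof.
elim: e => [|t|l|e1 IH1 e2 IH2] //= As Hc H x.
- by case: H => H; apply: (aeval_uniq _ As H).
- by case=> [<-|[]].
move: As => /andP [As1 As2].
rewrite List.in_app_iff.
case E1: (count_lvar e1) Hc => [|c1] Hc.
  have [H1 H2] := @cat_split _ _ _ _ _ (lvars0 _ E1) H.
  case=> Hx; [apply: IH1 => //; by rewrite E1 | by apply: IH2].
have E2 : count_lvar e2 = 0 by move: Hc; rewrite addSn ltnS leqn0 => /eqP; case: c1 {E1}.
have [H1 H2] := @cat_split_r _ _ _ _ _ (lvars0 _ E2) H.
case=> Hx; [apply: IH1 => //; rewrite E1; move: Hc; rewrite E2 addn0 //
           | apply: IH2 => //; by rewrite E2].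
Qed.
End Uniq.

Theorem mainTheorem1 (Ch IV SV AV LV : Type) (r : rule_schema Ch IV SV AV LV)
    (Hr : wf_rule_schema r)
    (G : graph (hlabel Ch)) (HG : totally_labelled G)
    (gv : rLV r -> gV G) (ge : rLE r -> gE G) (Hg : premorphism r G gv ge)
    (alpha beta : assignment Ch IV SV AV LV) :
  morphism_under r G gv ge alpha -> morphism_under r G gv ge beta -> alpha = beta.
Proof.
case=> _ Va Ea [] _ Vb Eb.
case: Hr => _ _ [Sv Se] [HR Hc] Hall.
have occ : forall x, occurs_L r x.
  move=> x; case: (Hall x) => [//|[/HR|/Hc]] //.
have Ag : forall x, @agree _ _ _ _ _ alpha beta x.
  move=> x; case: (occ x) => [[v Hx]|[e Hx]].
  - have H0 := Va v; rewrite Vb in H0; case: H0 => H0; have H := esym H0.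
    by move: (Sv v) => /andP [S1 S2]; apply: (@leval_uniq _ _ _ _ _ _ G gv alpha beta _ S1 S2 H).
  - have H0 := Ea e; rewrite Eb in H0; have H := esym (congr1 fst H0); simpl in H.
    by move: (Se e) => /andP [S1 S2]; apply: (@leval_uniq _ _ _ _ _ _ G gv alpha beta _ S1 S2 H).
case: alpha beta Ag {Va Ea Vb Eb} => [ai as_ aa al] [bi bs ba bl] Ag.
f_equal; apply: functional_extensionality.
- exact: (fun x => Ag (VI _ _ _ x)).
- exact: (fun x => Ag (VS _ _ _ x)).
- exact: (fun x => Ag (VA _ _ _ x)).
- exact: (fun x => Ag (VL _ _ _ x)).
Qed.
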